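(* (Perfect soundness of the Five Cells protocol.) Let a Five Cells puzzle on an $m\times n$ grid be given. If the prover $P$ does not know a solution of the puzzle, then in the Five Cells zero-knowledge protocol described in the context the verifier $V$ always rejects; equivalently, if $V$ accepts, then the cards printed during the protocol determine a partition of the grid into pentominoes which is a valid solution of the puzzle.
   Context: Five Cells puzzle: an $m\times n$ rectangular grid in which some cells contain a number. A solution is a partition of the grid into pentominoes (connected sets of 5 cells; a pentomino obtained from another by rotation or reflection counts as a different type, giving 63 types) such that for every numbered cell, the number equals the number of that cell's four edges which are borders of pentominoes (edges on the outer boundary of the grid count as borders). Cards: each card has either an integer or nothing (a blank card) on its front; all backs are indistinguishable. A pile-shifting shuffle applied to a matrix of face-down cards (each entry may be a stack, all stacks in a row of equal size) cyclically shifts its columns by a uniformly random amount unknown to everyone. Chosen cut protocol: given face-down cards (or equal-size stacks) $c_1,\dots,c_q$ and a secret index $i$ chosen by $P$, $P$ forms a $3\times q$ matrix with row 1 equal to $c_1,\dots,c_q$, row 2 a face-down card $1$ in column $i$ and $0$ elsewhere, row 3 a card $1$ in column 1 and $0$ elsewhere (turned face-down); a pile-shifting shuffle is applied; row 2 is revealed and the card of row 1 above the $1$ is $c_i$; after $c_i$ has been used it is put back, all face-up cards are turned face-down, another pile-shifting shuffle is applied, row 3 is revealed and the columns are cyclically shifted so that its $1$ returns to column 1. Printing protocol: given a face-down $p\times q$ template and a face-down $p\times q$ area, each template card is placed on the corresponding area card, forming $pq$ stacks of two; for each stack, $P$ uses the chosen cut protocol to select one of its two cards, the selected card is revealed, $V$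 rejects unless it is blank, and it is removed. Five Cells protocol: $P$ publicly puts a blank card on every cell, appends 4 rows and 4 columns of blank ''dummy'' cards below and to the right, and turns all cards face-down, giving an $(m+4)\times(n+4)$ matrix, read row by row as a sequence $a_1,a_2,\dots$. $P$ builds 63 templates, one per pentomino type: a $5\times5$ matrix with the pentomino at the top-left, each of its cells a card with the number of that cell's edges which are borders of the pentomino, all other cards blank; $V$ checks all templates. For $i=1,\dots,k$ with $k=mn/5$: (1) using the chosen cut protocol on the sequence, $P$ selects the top-left card of a $5\times5$ area (cards at positions $j+r(n+4)+c$, $0\le r,c\le4$); (2) using the chosen cut protocol, $P$ selects one template; (3) the printing protocol is applied to this template and area; (4) $P$ reconstructs a template and returns it to the pile, and $V$ checks again that the pile consists of the 63 correct templates (rejecting otherwise). Finally $P$ reveals the cards on the originally numbered cells and $V$ rejects unless they match the given numbers; $P$ reveals all dummy cards and $V$ rejects unless they are blank. Otherwise $V$ accepts. *)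

(* Defs.v *)
From mathcomp Require Import all_boot.
Set Implicit Arguments. Unset Strict Implicit. Unset Printing Implicit Defensive.

(* cells of an m x n grid: (row, column) *)
Definition cell (m n : nat) := ('I_m * 'I_n)%type.

Definition coords m n (x : cell m n) : nat * nat := (nat_of_ord x.1, nat_of_ord x.2).

Definition adjacent m n (x y : cell m n) : bool :=
  ((x.1 == y.1 :> nat) && ((x.2.+1 == y.2 :> nat) || (y.2.+1 == x.2 :> nat)))
  || ((x.2 == y.2 :> nat) && ((x.1.+1 == y.1 :> nat) || (y.1.+1 == x.1 :> nat))).

Definition connected_cells m n (B : {set cell m n}) : bool :=
  [forall x in B, forall y in B,
     connect [rel u v | [&& u \in B, v \in B & adjacent u v]] x y].

Definition pentomino m n (B : {set cell m n}) : bool :=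
  (#|B| == 5) && connected_cells B.

Definition inB m n (B : {set cell m n}) (p : nat * nat) : bool :=
  [exists x in B, coords x == p].

(* number of the four edges of the cell at coordinates (i,j) that are borders
   of the region A: an edge is a border iff the cell across it is not in A
   (edges on the outer boundary are borders). *)
Definition bcount (A : nat * nat -> bool) (p : nat * nat) : nat :=
  let: (i, j) := p in
  ((i == 0) || ~~ A (i.-1, j)) + ~~ A (i.+1, j)
  + ((j == 0) || ~~ A (i, j.-1)) + ~~ A (i, j.+1).

(* clues: Some v on a numbered cell, None otherwise *)
Definition puzzle m n := cell m n -> option nat.

Definition solution m n (clue : puzzle m n) (P : {set {set cell m n}}) : Prop :=
  [/\ partition P [set: cell m n],
      {in P, forall B, pentomino B} &
      forall x v, clue x = Some v -> bcount (inB (pblock P x)) (coords x) = v].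

(* pentomino types: pentominoes in a 5x5 box touching row 0 and column 0
   (the 63 fixed pentominoes, one per template) *)
Definition ptype (S : {set cell 5 5}) : bool :=
  [&& pentomino S, [exists x in S, x.1 == 0 :> nat] & [exists x in S, x.2 == 0 :> nat]].

(* card: Some k = card with integer k, None = blank card *)
Definition card := option nat.

Definition tcard (S : {set cell 5 5}) (r c : nat) : card :=
  if inB S (r, c) then Some (bcount (inB S) (r, c)) else None.

(* state of the (m+4) x (n+4) matrix read row by row (positions 0,1,2,...) *)
Definition state := nat -> card.

Definition width (n : nat) := n + 4.
Definition total (m n : nat) := (m + 4) * width n.

Definition pos m n (x : cell m n) : nat := x.1 * width n + x.2.

Definition is_dummy m n (p : nat) : bool := (m <= p %/ width n) || (n <= p %% width n).

(* one round of the prover: top-left position of the 5x5 area, the selected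
   template type, and for each stack (r,c) whether P selects (to reveal and
   remove) the template card (true) or the area card (false) *)
Record choice := Choice { top : nat; typ : {set cell 5 5}; sel : nat -> nat -> bool }.

Definition area_off (n j p : nat) : option (nat * nat) :=
  if j <= p then
    let d := p - j in
    if (d %/ width n < 5) && (d %% width n < 5) then Some (d %/ width n, d %% width n)
    else None
  else None.

(* V does not reject during the round *)
Definition round_ok m n (s : state) (ch : choice) : bool :=
  [&& ptype (typ ch),
      top ch + 4 * width n + 4 < total m n &
      [forall r : 'I_5, forall c : 'I_5,
         (if sel ch r c then tcard (typ ch) r c
          else s (top ch + r * width n + c)) == None]].

(* the area after printing: each stack keeps its unselected card *)
Definition step n (s : state) (ch : choice) : state :=
  fun p => match area_off n (top ch) p with
           | Some (r, c) => if sel ch r c then s p else tcard (typ ch) r c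
           | None => s p
           end.

Fixpoint run m n (s : state) (chs : seq choice) : option state :=
  match chs with
  | [::] => Some s
  | ch :: t => if round_ok m n s ch then run m n (step n s ch) t else None
  end.

Definition init : state := fun _ => None.

Definition accepts m n (clue : puzzle m n) (chs : seq choice) : Prop :=
  size chs = (m * n) %/ 5 /\
  exists s, run m n init chs = Some s /\
    (forall x v, clue x = Some v -> s (pos x) = Some v) /\
    (forall p, p < total m n -> is_dummy m n p -> s p = None).

Definition placed m n (ch : choice) : {set cell m n} :=
  [set x : cell m n | [exists y in typ ch, pos x == top ch + y.1 * width n + y.2]].

(* Main.v *)
Require Import Defs.
From mathcomp Require Import all_boot.
From mathcomp Require Import zify.
Set Implicit Arguments. Unset Strict Implicit. Unset Printing Implicit Defensive.

Fixpoint inl (x : choice) (s : seq choice) : Prop :=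
  if s is c :: t then c = x \/ inl x t else False.

Lemma map_inl (T : eqType) (f : choice -> T) s y :
  y \in map f s -> exists2 x, inl x s & y = f x.
Proof.
elim: s => [|c t IH] //=; rewrite in_cons => /orP[/eqP->|/IH[x xt ->]].
  by exists c; [left|].
by exists x; [right|].
Qed.

Lemma inl_map (T : eqType) (f : choice -> T) s x : inl x s -> f x \in map f s.
Proof.
elim: s => [|c t IH] //= [->|/IH H]; rewrite in_cons ?eqxx //.
by rewrite H orbT.
Qed.

Lemma flatten_inl (T : eqType) (f : choice -> seq T) s y :
  y \in flatten (map f s) -> exists2 x, inl x s & y \in f x.
Proof.
elim: s => [|c t IH] //=; rewrite mem_cat => /orP[H|/IH[x xt H]].
  by exists c; [left|].
by exists x; [right|].
Qed.

Definition fpos n (ch : choice) (y : cell 5 5) : nat := top ch + y.1 * width n + y.2.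

Lemma area_off_f n ch (y : cell 5 5) : 0 < n ->
  area_off n (top ch) (fpos n ch y) = Some (nat_of_ord y.1, nat_of_ord y.2).
Proof.
move=> n0; rewrite /area_off /fpos -addnA leq_addr addKn.
have w0 : 0 < width n by rewrite /width addn4.
have y2 : y.2 < width n by apply: leq_trans (ltn_ord y.2) _; rewrite /width; lia.
rewrite divnMDl // divn_small // addn0 modnMDl modn_small //.
by rewrite !ltn_ord.
Qed.

Lemma tcard_some (S : {set cell 5 5}) y : y \in S ->
  tcard S y.1 y.2 = Some (bcount (inB S) (nat_of_ord y.1, nat_of_ord y.2)).
Proof.
move=> yS; rewrite /tcard; have -> // : inB S (nat_of_ord y.1, nat_of_ord y.2).
by apply/existsP; exists y; rewrite yS /coords eqxx.
Qed.

Lemma step_keep m n s ch p : round_ok m n s ch -> s p != None -> step n s ch p = s p.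
Proof.
case/and3P=> _ _ /forallP H sp; rewrite /step /area_off.
case: ifP => // jp; case: ifP => // /andP[r5 c5].
case: ifP => // sl.
have := forallP (H (Ordinal r5)) (Ordinal c5); rewrite /= sl.
have -> : top ch + (p - top ch) %/ width n * width n + (p - top ch) %% width n = p.
  by rewrite -addnA -divn_eq subnKC.
by move/eqP=> E; rewrite E in sp.
Qed.

Lemma step_write m n s ch y : 0 < n -> round_ok m n s ch -> y \in typ ch ->
  s (fpos n ch y) = None /\ step n s ch (fpos n ch y) = tcard (typ ch) y.1 y.2.
Proof.
move=> n0 R yS; have R' := R; case/and3P: R' => _ _ /forallP H.
have := forallP (H y.1) y.2; rewrite (tcard_some yS).
rewrite /step area_off_f //.
case: (sel ch y.1 y.2) => /=; first by move/eqP.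
by move/eqP => E; rewrite /fpos E (tcard_some yS).
Qed.

Lemma run_keep m n s chs s' p : run m n s chs = Some s' -> s p != None -> s' p = s p.
Proof.
elim: chs s => [|ch t IH] s /=; first by move=> [->].
case: ifP => // R /IH H sp; rewrite H (step_keep R sp) //.
Qed.

Lemma run_ok m n s chs s' (ch : choice) : run m n s chs = Some s' -> inl ch chs ->
  ptype (typ ch) && (top ch + 4 * width n + 4 < Defs.total m n).
Proof.
elim: chs s => [|c t IH] s //=.
case: ifP => // R H; move=> [<-|]; last exact: IH H.
by case/and3P: R => -> ->.
Qed.

Lemma run_write m n s chs s' (ch : choice) y : 0 < n -> run m n s chs = Some s' -> inl ch chs ->
  y \in typ ch -> s' (fpos n ch y) = tcard (typ ch) y.1 y.2.
Proof.
move=> n0; elim: chs s => [|c t IH] s //=.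
case: ifP => // R H; move=> [<-|]; last exact: IH H.
move=> yS; have [_ E] := step_write n0 R yS.
by rewrite (run_keep H) E // (tcard_some yS).
Qed.

Lemma run_blank m n s chs s' (ch : choice) y : 0 < n -> run m n s chs = Some s' -> inl ch chs ->
  y \in typ ch -> s (fpos n ch y) = None.
Proof.
move=> n0; elim: chs s => [|c t IH] s //=.
case: ifP => // R H; move=> [<-|]; first by move=> yS; case: (step_write n0 R yS).
move=> ct yS; have E := IH _ H ct yS.
case sp: (s (fpos n ch y)) => [v|] //.
by rewrite (step_keep (p := fpos n ch y) R) ?sp // in E.
Qed.

Lemma core m n s c t s' (ch' : choice) (x : cell m n) : 0 < n -> round_ok m n s c ->
  run m n (step n s c) t = Some s' -> inl ch' t -> x \in placed m n c ->
  x \in placed m n ch' -> False.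
Proof.
move=> n0 R H ct; rewrite !inE => /existsP[y /andP[yS /eqP E1]] /existsP[z /andP[zS /eqP E2]].
have := run_blank n0 H ct zS; rewrite [fpos n ch' z]/fpos -E2 E1 -[top c + _ + _]/(fpos n c y).
by case: (step_write n0 R yS) => _ ->; rewrite (tcard_some yS).
Qed.

Lemma run_uniq m n s chs s' : 0 < n -> run m n s chs = Some s' ->
  uniq (flatten [seq enum (placed m n ch) | ch <- chs]).
Proof.
move=> n0; elim: chs s => [|c t IH] s //=.
case: ifP => // R H; rewrite cat_uniq enum_uniq (IH _ H) andbT /=.
apply/hasPn => x /flatten_inl[ch' ct xc']; rewrite mem_enum.
by apply/negP => xc; rewrite mem_enum in xc'; apply: (core n0 R H ct xc xc').
Qed.

Lemma run_same m n s chs s' (ch ch' : choice) (x : cell m n) : 0 < n -> run m n s chs = Some s' ->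
  inl ch chs -> inl ch' chs -> x \in placed m n ch -> x \in placed m n ch' ->
  placed m n ch = placed m n ch'.
Proof.
move=> n0; elim: chs s => [|c t IH] s //=.
case: ifP => // R H; move=> [<-|ct] [<-|ct'] // xa xb.
- by case: (core n0 R H ct' xa xb).
- by case: (core n0 R H ct xb xa).
- exact: IH H ct ct' xa xb.
Qed.

Section Geo.
Variables (m n : nat) (ch : choice).
Local Notation w := (width n.+1).
Hypothesis Hp : ptype (typ ch).
Hypothesis Hd : forall y, y \in typ ch -> ~~ is_dummy m.+1 n.+1 (fpos n.+1 ch y).

Definition trr := top ch %/ w.
Definition tcc := top ch %% w.

Lemma w0 : 0 < w. Proof. by rewrite /width addn4. Qed.

Lemma fposE y : fpos n.+1 ch y = (trr + y.1) * w + (tcc + y.2).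
Proof. by rewrite /fpos {1}(divn_eq (top ch) w) /trr /tcc mulnDl; lia. Qed.

Lemma tc_lt : tcc < n.+1.
Proof.
case/and3P: Hp => _ _ /existsP[y0 /andP[y0S /eqP y02]].
have := Hd y0S; rewrite /is_dummy fposE y02 addn0 modnMDl modn_small ?ltn_pmod ?w0 //.
by rewrite negb_or -!ltnNge => /andP[].
Qed.

Lemma bounds y : y \in typ ch -> trr + y.1 < m.+1 /\ tcc + y.2 < n.+1.
Proof.
move=> yS; have tw : tcc + y.2 < w.
  have := tc_lt; have := ltn_ord y.2; rewrite /width; lia.
have := Hd yS; rewrite /is_dummy fposE divnMDl ?w0 // divn_small // addn0.
rewrite modnMDl modn_small // negb_or -!ltnNge => /andP[-> ->] //.
Qed.

Definition gg (y : cell 5 5) : cell m.+1 n.+1 := (inord (trr + y.1), inord (tcc + y.2)).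

Lemma g1 y : y \in typ ch -> (gg y).1 = trr + y.1 :> nat.
Proof. by move=> yS; rewrite /= inordK //; case: (bounds yS). Qed.

Lemma g2 y : y \in typ ch -> (gg y).2 = tcc + y.2 :> nat.
Proof. by move=> yS; rewrite /= inordK //; case: (bounds yS). Qed.

Lemma pos_g y : y \in typ ch -> pos (gg y) = fpos n.+1 ch y.
Proof. by move=> yS; rewrite fposE /pos g1 ?g2. Qed.

Lemma pos_inj : injective (@pos m.+1 n.+1).
Proof.
move=> [a b] [a' b']; rewrite /pos /= => E.
have bw : b < w by have := ltn_ord b; rewrite /width; lia.
have bw' : b' < w by have := ltn_ord b'; rewrite /width; lia.
have E1 := congr1 (divn^~ w) E; have E2 := congr1 (modn^~ w) E; move: E1 E2 => /=.
rewrite !divnMDl ?w0 // !divn_small // !addn0 !modnMDl !modn_small // => E1 E2.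
by congr (_, _); apply/val_inj.
Qed.

Lemma placedE : placed m.+1 n.+1 ch = gg @: typ ch.
Proof.
apply/setP => x; rewrite inE; apply/existsP/imsetP.
  case=> y /andP[yS /eqP E]; exists y => //; apply: pos_inj; by rewrite pos_g.
by case=> y yS ->; exists y; rewrite yS /=; apply/eqP; exact: pos_g.
Qed.

Lemma g_inj : {in typ ch &, injective gg}.
Proof.
move=> y y' yS yS' E.
have E1 := congr1 (fun x => nat_of_ord x.1) E; have E2 := congr1 (fun x => nat_of_ord x.2) E.
move: E1 E2; rewrite /= -/(gg y) -/(gg y').
rewrite (g1 yS) (g1 yS') (g2 yS) (g2 yS') => /addnI E1 /addnI E2.
by move: y y' {yS yS' E} E1 E2 => [a b] [a' b'] /= E1 E2; congr (_, _); apply/val_inj.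
Qed.

Lemma card_placed : #|placed m.+1 n.+1 ch| = 5.
Proof.
rewrite placedE card_in_imset; last exact: g_inj.
by case/and3P: Hp => /andP[/eqP].
Qed.

Lemma adj_g u v : u \in typ ch -> v \in typ ch -> adjacent (gg u) (gg v) = adjacent u v.
Proof.
move=> uS vS; rewrite /adjacent (g1 uS) (g1 vS) (g2 uS) (g2 vS).
by rewrite !eqn_add2l -!addnS !eqn_add2l.
Qed.

Lemma connect_map (T U : finType) (e : rel T) (e' : rel U) (f : T -> U) x y :
  (forall a b, e a b -> e' (f a) (f b)) -> connect e x y -> connect e' (f x) (f y).
Proof.
move=> H /connectP[p pth ->]; elim: p x pth => [|z p IH] x /=; first by rewrite connect0.
case/andP => exz pz; exact: connect_trans (connect1 (H _ _ exz)) (IH _ pz).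
Qed.

Lemma pent_placed : pentomino (placed m.+1 n.+1 ch).
Proof.
rewrite /pentomino card_placed eqxx /= placedE.
case/and3P: Hp => /andP[_ /forallP Hc] _ _.
apply/forallP => a; apply/implyP => /imsetP[y yS ->].
apply/forallP => b; apply/implyP => /imsetP[y' yS' ->].
have := forallP (implyP (Hc y) yS) y'; rewrite yS' /= => Hcy.
apply: connect_map Hcy => u v /= /and3P[uS vS uv].
by rewrite !imset_f //= adj_g.
Qed.

Lemma inB_placed a b : inB (placed m.+1 n.+1 ch) (trr + a, tcc + b) = inB (typ ch) (a, b).
Proof.
rewrite placedE /inB; apply/existsP/existsP.
  case=> x /andP[/imsetP[y yS ->] /eqP]; rewrite /coords (g1 yS) (g2 yS).
  by move=> [/addnI E1 /addnI E2]; exists y; rewrite yS /= E1 E2.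
case=> y /andP[yS /eqP]; rewrite /coords => -[E1 E2]; exists (gg y).
by rewrite imset_f //= /coords (g1 yS) (g2 yS) E1 E2.
Qed.

Lemma inB_lo i j : (i < trr) || (j < tcc) -> inB (placed m.+1 n.+1 ch) (i, j) = false.
Proof.
move=> H; apply/existsP => -[x /andP[]]; rewrite placedE => /imsetP[y yS ->] /eqP.
rewrite /coords (g1 yS) (g2 yS) => -[E1 E2]; move: H; rewrite -E1 -E2; lia.
Qed.

Lemma bcount_placed a b :
  bcount (inB (placed m.+1 n.+1 ch)) (trr + a, tcc + b) = bcount (inB (typ ch)) (a, b).
Proof.
rewrite /bcount -!addnS !inB_placed.
have -> : (trr + a == 0) || ~~ inB (placed m.+1 n.+1 ch) ((trr + a).-1, tcc + b)
        = (a == 0) || ~~ inB (typ ch) (a.-1, b).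
  case: a => [|a]; last by rewrite addnS /= -inB_placed.
  rewrite addn0 /=; case E: trr => [|t] //=; by rewrite inB_lo // E ltnSn.
have -> : (tcc + b == 0) || ~~ inB (placed m.+1 n.+1 ch) (trr + a, (tcc + b).-1)
        = (b == 0) || ~~ inB (typ ch) (a, b.-1).
  case: b => [|b]; last by rewrite addnS /= -inB_placed.
  rewrite addn0 /=; case E: tcc => [|t] //=; by rewrite inB_lo // E ltnSn orbT.
by [].
Qed.

End Geo.

Lemma sumn_const (f : choice -> nat) k s :
  (forall ch, inl ch s -> f ch = k) -> sumn (map f s) = k * size s.
Proof.
elim: s => [|c t IH] H /=; first by rewrite muln0.
by rewrite (H c (or_introl erefl)) IH ?mulnS // => ch ct; apply: H; right.
Qed.

Theorem lemma2 (m n : nat) (clue : puzzle m n) (chs : seq choice) :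
  5 %| m * n ->
  accepts clue chs ->
  solution clue [set:: [seq placed m n ch | ch <- chs]].
Proof.
move=> dv [sz [s [Hrun [Hclue Hdum]]]].
case: m clue chs dv sz Hrun Hclue Hdum => [|m] clue chs dv sz Hrun Hclue Hdum.
  have -> : chs = [::] by apply/size0nil; rewrite sz.
  split; [|by move=> B; rewrite inE | by move=> [[a ha] b]; have := ha; rewrite ltn0].
  rewrite /partition /trivIset /cover !big_set0 cards0 inE /= andbT.
  by apply/eqP/setP => -[[a ha] b]; have := ha; rewrite ltn0.
case: n clue chs dv sz Hrun Hclue Hdum => [|n] clue chs dv sz Hrun Hclue Hdum.
  have -> : chs = [::] by apply/size0nil; rewrite sz muln0.
  split; [|by move=> B; rewrite inE | by move=> [a [b hb]]; have := hb; rewrite ltn0].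
  rewrite /partition /trivIset /cover !big_set0 cards0 inE /= andbT.
  by apply/eqP/setP => -[a [b hb]]; have := hb; rewrite ltn0.
have n0 : 0 < n.+1 by [].
set P := [set:: _].
have memP B : reflect (exists2 ch, inl ch chs & B = placed m.+1 n.+1 ch) (B \in P).
  rewrite inE; apply: (iffP idP); first exact: map_inl.
  by case=> ch c ->; apply: inl_map.
have Hch ch : inl ch chs -> ptype (typ ch) /\
    (forall y, y \in typ ch -> ~~ is_dummy m.+1 n.+1 (fpos n.+1 ch y)).
  move=> c; case/andP: (run_ok Hrun c) => pt bd; split => // y yS.
  apply/negP => dm.
  have lt : fpos n.+1 ch y < Defs.total m.+1 n.+1.
    have h1 : y.1 * width n.+1 <= 4 * width n.+1 by rewrite leq_mul2r -ltnS ltn_ord orbT.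
    have := ltn_ord y.2; move: bd h1; rewrite /fpos.
    move: (width n.+1) (Defs.total m.+1 n.+1) (top ch) (nat_of_ord y.1) (nat_of_ord y.2) => W T t a b.
    lia.
  by have := Hdum _ lt dm; rewrite (run_write n0 Hrun c yS) (tcard_some yS).
have card5 ch : inl ch chs -> #|placed m.+1 n.+1 ch| = 5.
  by move=> c; case: (Hch _ c) => pt hd; apply: card_placed.
have triv : trivIset P.
  apply/trivIsetP => A B /memP[ch c ->] /memP[ch' c' ->] ne.
  rewrite disjoint_subset; apply/subsetP => x xa; rewrite inE; apply/negP => xb.
  by move/eqP: ne; apply; apply: (run_same n0 Hrun c c' xa xb).
have cov x : x \in cover P.
  set L := flatten [seq enum (placed m.+1 n.+1 ch) | ch <- chs].
  have uL : uniq L := run_uniq n0 Hrun.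
  have sL : size L = m.+1 * n.+1.
    rewrite /L size_flatten /shape -map_comp (@sumn_const _ 5).
      by rewrite sz mulnC divnK.
    by move=> ch c /=; rewrite -cardE card5.
  have xL : x \in L.
    apply/negPn/negP => xL.
    have : uniq (x :: L) by rewrite /= xL.
    move/card_uniqP => /= cd.
    have := max_card (mem (x :: L)); rewrite cd sL card_prod !card_ord; lia.
  case/flatten_inl: xL => ch c; rewrite mem_enum => xc.
  by apply/bigcupP; exists (placed m.+1 n.+1 ch) => //; apply/memP; exists ch.
split.
- apply/and3P; split => //; first by apply/eqP/setP => x; rewrite inE cov.
  apply/negP => /memP[ch c H0].
  by have := card5 _ c; rewrite -H0 cards0.
- move=> B /memP[ch c ->]; case: (Hch _ c) => pt hd; exact: pent_placed.
move=> x v cx.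
case/bigcupP: (cov x) => B BP xB.
rewrite (def_pblock triv BP xB).
case/memP: BP xB => ch c ->.
case: (Hch _ c) => pt hd.
rewrite (placedE pt hd) => /imsetP[y yS xE].
have := Hclue _ _ cx; rewrite xE.
rewrite (pos_g pt hd yS) (run_write n0 Hrun c yS) (tcard_some yS) => -[<-].
rewrite -(placedE pt hd) /coords (g1 pt hd yS) (g2 pt hd yS).
exact: bcount_placed.
Qed.
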